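(* Fix $c, r, \epsilon > 0$ and let $\alpha(\epsilon) = \frac{e^{\epsilon}+1}{e^{\epsilon}-1}$. A binary-output stochastic quantizer is a stochastic mapping $Q : [c-r, c+r] \to \{\gamma_1, \gamma_2\}$, where $\gamma_1, \gamma_2 \in \mathbb{R}$. Consider the following conditions on such a quantizer: (C1) Unbiasedness: $\mathbb{E}(Q(w)) = w$ for all $w \in [c-r, c+r]$; (C2) $\epsilon$-PLDP: $\frac{P(Q(w) = \overline{w})}{P(Q(w') = \overline{w})} \le e^{\epsilon}$ for all $\overline{w} \in \{\gamma_1, \gamma_2\}$ and all $w, w' \in [c-r, c+r]$; (C3) Minimal MSE: $\mathbb{E}((Q(w) - w)^2)$ is minimized for every $w \in [c-r, c+r]$. Define the quantizer $Q(w) = c + U r \alpha(\epsilon)$ for $w \in [c-r, c+r]$, where $U$ is a $\{-1, 1\}$-valued random variable with $P(U = 1) = \frac{1}{2} + \frac{w - c}{2 r \alpha(\epsilon)}$ and $P(U = -1) = \frac{1}{2} - \frac{w - c}{2 r \alpha(\epsilon)}$. Then $Q$ is the unique binary-output stochastic quantizer satisfying conditions (C1)–(C3).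
   Context: In condition (C3) the minimization is over binary-output stochastic quantizers (including the choice of the output values $\gamma_1, \gamma_2$) satisfying the other conditions, and it is required to hold simultaneously at every input $w$. *)

(* Defs.v *)
From Stdlib Require Import Reals.
Open Scope R_scope.

Definition alpha (eps : R) : R := (exp eps + 1) / (exp eps - 1).

Definition in_dom (c r w : R) : Prop := c - r <= w <= c + r.

(* A binary-output stochastic quantizer Q : [c-r,c+r] -> {g1,g2} is given by
   its output values g1 g2 and, for each input w, the probability p w that
   Q(w) = g1 (so Q(w) = g2 with probability 1 - p w). *)
Definition is_quantizer (c r g1 g2 : R) (p : R -> R) : Prop :=
  forall w, in_dom c r w -> 0 <= p w <= 1.

Definition law (g1 g2 : R) (p : R -> R) (w x : R) : R :=
  (if Req_EM_T x g1 then p w else 0) + (if Req_EM_T x g2 then 1 - p w else 0).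

Definition expect (g1 g2 : R) (p : R -> R) (w : R) : R :=
  p w * g1 + (1 - p w) * g2.

Definition mse (g1 g2 : R) (p : R -> R) (w : R) : R :=
  p w * (g1 - w) ^ 2 + (1 - p w) * (g2 - w) ^ 2.

Definition C1 (c r g1 g2 : R) (p : R -> R) : Prop :=
  forall w, in_dom c r w -> expect g1 g2 p w = w.

(* (C2) eps-PLDP, ratio bound written multiplicatively:
   P(Q(w)=x) <= e^eps * P(Q(w')=x) *)
Definition C2 (c r eps g1 g2 : R) (p : R -> R) : Prop :=
  forall x w w', (x = g1 \/ x = g2) -> in_dom c r w -> in_dom c r w' ->
    law g1 g2 p w x <= exp eps * law g1 g2 p w' x.

Definition C3 (c r eps g1 g2 : R) (p : R -> R) : Prop :=
  forall h1 h2 (q : R -> R), is_quantizer c r h1 h2 q ->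
    C1 c r h1 h2 q -> C2 c r eps h1 h2 q ->
    forall w, in_dom c r w -> mse g1 g2 p w <= mse h1 h2 q w.

Definition good_quantizer (c r eps g1 g2 : R) (p : R -> R) : Prop :=
  is_quantizer c r g1 g2 p /\ C1 c r g1 g2 p /\ C2 c r eps g1 g2 p /\
  C3 c r eps g1 g2 p.

Definition qs_g1 (c r eps : R) : R := c + r * alpha eps.
Definition qs_g2 (c r eps : R) : R := c - r * alpha eps.
Definition qs_p (c r eps : R) (w : R) : R := / 2 + (w - c) / (2 * r * alpha eps).

(* Main.v *)
Require Import Defs.
From Stdlib Require Import Reals Lra Psatz.
Open Scope R_scope.

Lemma mse_form h1 h2 q w : h1 <> h2 -> expect h1 h2 q w = w ->
  mse h1 h2 q w = (w - h2) * (h1 - w).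
Proof.
  unfold expect, mse; intros hd he.
  assert (hq : q w * (h1 - h2) = w - h2) by nra.
  apply (Rmult_eq_reg_r (h1 - h2)); [| lra].
  assert (E : (q w * (h1 - w) ^ 2 + (1 - q w) * (h2 - w) ^ 2) * (h1 - h2)
     - (w - h2) * (h1 - w) * (h1 - h2)
     = (q w * (h1 - h2) - (w - h2)) * ((h1 - w) ^ 2 - (h2 - w) ^ 2)) by ring.
  rewrite hq in E. lra.
Qed.

Lemma law1 h1 h2 q w : h1 <> h2 -> law h1 h2 q w h1 = q w.
Proof.
  intro h; unfold law; destruct (Req_EM_T h1 h1); destruct (Req_EM_T h1 h2); lra.
Qed.

Lemma law2 h1 h2 q w : h1 <> h2 -> law h1 h2 q w h2 = 1 - q w.
Proof.
  intro h; unfold law; destruct (Req_EM_T h2 h1); destruct (Req_EM_T h2 h2);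
  subst; try lra; congruence.
Qed.

Lemma lawo h1 h2 q w x : x <> h1 -> x <> h2 -> law h1 h2 q w x = 0.
Proof.
  intros a b; unfold law; destruct (Req_EM_T x h1); destruct (Req_EM_T x h2);
  congruence || lra.
Qed.

Lemma key c r eps h1 h2 q : 0 < r -> 0 < eps ->
  Defs.C1 c r h1 h2 q -> C2 c r eps h1 h2 q ->
  h1 <> h2 /\
  ((h1 - h2 > 0 /\ h1 >= c + r * alpha eps /\ h2 <= c - r * alpha eps) \/
   (h1 - h2 < 0 /\ h2 >= c + r * alpha eps /\ h1 <= c - r * alpha eps)).
Proof.
  intros hr he h1c h2c.
  assert (hE : 1 < exp eps) by (rewrite <- exp_0; apply exp_increasing; lra).
  set (E := exp eps) in *.
  assert (ha : alpha eps * (E - 1) = E + 1) by (unfold alpha; fold E; field; lra).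
  set (a := alpha eps) in *.
  assert (dm : in_dom c r (c - r)) by (unfold in_dom; lra).
  assert (dp : in_dom c r (c + r)) by (unfold in_dom; lra).
  assert (hne : h1 <> h2).
  { intro hh; subst. pose proof (h1c _ dm); pose proof (h1c _ dp).
    unfold expect in *. lra. }
  split; [exact hne|].
  pose proof (h1c _ dm) as em; pose proof (h1c _ dp) as ep; unfold expect in em, ep.
  assert (qm : q (c - r) * (h1 - h2) = c - r - h2) by nra.
  assert (qp : q (c + r) * (h1 - h2) = c + r - h2) by nra.
  pose proof (h2c h1 (c+r) (c-r) (or_introl eq_refl) dp dm) as a1.
  pose proof (h2c h1 (c-r) (c+r) (or_introl eq_refl) dm dp) as a2.
  pose proof (h2c h2 (c+r) (c-r) (or_intror eq_refl) dp dm) as a3.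
  pose proof (h2c h2 (c-r) (c+r) (or_intror eq_refl) dm dp) as a4.
  rewrite !law1 in a1, a2 by exact hne.
  rewrite !law2 in a3, a4 by exact hne.
  fold E in a1, a2, a3, a4.
  destruct (Rlt_or_le 0 (h1 - h2)) as [hd | hd].
  - left. split; [lra|].
    assert (b1 : c + r - h2 <= E * (c - r - h2)).
    { rewrite <- qp, <- qm. pose proof (Rmult_le_compat_r _ _ _ (Rlt_le _ _ hd) a1). nra. }
    assert (b3 : h1 - c + r <= E * (h1 - c - r)).
    { pose proof (Rmult_le_compat_r _ _ _ (Rlt_le _ _ hd) a3). nra. }
    split; nra.
  - right. assert (hd' : h1 - h2 < 0) by (destruct hd; [lra| exfalso; apply hne; lra]).
    split; [lra|].
    assert (hd2 : 0 <= h2 - h1) by lra.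
    assert (b2 : c - r - h2 >= E * (c + r - h2)).
    { pose proof (Rmult_le_compat_r _ _ _ hd2 a2). nra. }
    assert (b4 : h1 - c - r >= E * (h1 - c + r)).
    { pose proof (Rmult_le_compat_r _ _ _ hd2 a4). nra. }
    split; nra.
Qed.

Lemma alpha_facts eps : 0 < eps ->
  1 < exp eps /\ alpha eps * (exp eps - 1) = exp eps + 1 /\ 1 < alpha eps.
Proof.
  intro he.
  assert (hE : 1 < exp eps) by (rewrite <- exp_0; apply exp_increasing; lra).
  assert (ha : alpha eps * (exp eps - 1) = exp eps + 1) by (unfold alpha; field; lra).
  split; [lra| split; [exact ha|]]. nra.
Qed.

Lemma tbound c r eps w : 0 < r -> 0 < eps -> in_dom c r w ->
  let t := (w - c) / (2 * r * alpha eps) in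
  t * (2 * r * alpha eps) = w - c /\ -1 <= 2 * t * alpha eps <= 1.
Proof.
  intros hr he hw t. destruct (alpha_facts eps he) as [hE [ha ha1]].
  unfold in_dom in hw.
  assert (e : t * (2 * r * alpha eps) = w - c) by (unfold t; field; split; lra).
  split; [exact e|]. split; nra.
Qed.

Lemma qs_good c r eps : 0 < r -> 0 < eps ->
  good_quantizer c r eps (qs_g1 c r eps) (qs_g2 c r eps) (qs_p c r eps).
Proof.
  intros hr he. destruct (alpha_facts eps he) as [hE [ha ha1]].
  assert (hne : qs_g1 c r eps <> qs_g2 c r eps).
  { unfold qs_g1, qs_g2; intro h; nra. }
  assert (hC1 : Defs.C1 c r (qs_g1 c r eps) (qs_g2 c r eps) (qs_p c r eps)).
  { intros w hw. unfold expect, qs_p, qs_g1, qs_g2. field. split; lra. }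
  assert (pb : forall w, in_dom c r w ->
     alpha eps * qs_p c r eps w <= (alpha eps + 1) / 2 /\
     (alpha eps - 1) / 2 <= alpha eps * qs_p c r eps w).
  { intros w hw. destruct (tbound c r eps w hr he hw) as [_ hb].
    unfold qs_p. lra. }
  split; [| split; [exact hC1| split]].
  - intros w hw. destruct (pb w hw). split; nra.
  - intros x w w' hx hw hw'. destruct (pb w hw), (pb w' hw').
    destruct hx as [-> | ->].
    + rewrite !law1 by exact hne.
      apply (Rmult_le_reg_l (alpha eps)); [lra|]. nra.
    + rewrite !law2 by exact hne.
      apply (Rmult_le_reg_l (alpha eps)); [lra|]. nra.
  - intros h1 h2 q hq hc1 hc2 w hw.
    destruct (key c r eps h1 h2 q hr he hc1 hc2) as [hn [[hd [k1 k2]] | [hd [k1 k2]]]];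
    rewrite (mse_form _ _ _ _ hne (hC1 w hw)), (mse_form _ _ _ _ hn (hc1 w hw));
    unfold qs_g1, qs_g2; unfold in_dom in hw;
    assert (rr : r <= r * alpha eps) by nra.
    + assert (s1 : 0 <= h1 - c - r * alpha eps) by lra.
      assert (s2 : 0 <= c - r * alpha eps - h2) by lra.
      assert (s3 : 0 <= w - (c - r * alpha eps)) by lra.
      assert (s4 : 0 <= c + r * alpha eps - w) by lra.
      nra.
    + assert (s1 : 0 <= h2 - c - r * alpha eps) by lra.
      assert (s2 : 0 <= c - r * alpha eps - h1) by lra.
      assert (s3 : 0 <= w - (c - r * alpha eps)) by lra.
      assert (s4 : 0 <= c + r * alpha eps - w) by lra.
      nra.
Qed.

Theorem proposition1 (c r eps : R) (hc : 0 < c) (hr : 0 < r) (heps : 0 < eps) :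
  good_quantizer c r eps (qs_g1 c r eps) (qs_g2 c r eps) (qs_p c r eps) /\
  (forall g1 g2 (p : R -> R), good_quantizer c r eps g1 g2 p ->
     forall w, in_dom c r w -> forall x,
       law g1 g2 p w x = law (qs_g1 c r eps) (qs_g2 c r eps) (qs_p c r eps) w x).
Proof.
  pose proof (qs_good c r eps hr heps) as G.
  split; [exact G|].
  intros g1 g2 p [hq [hc1 [hc2 hc3]]] w hw x.
  destruct G as [Gq [GC1 [GC2 _]]].
  destruct (alpha_facts eps heps) as [hE [ha ha1]].
  assert (dc : in_dom c r c) by (unfold in_dom; lra).
  pose proof (hc3 _ _ _ Gq GC1 GC2 c dc) as m.
  assert (hne : qs_g1 c r eps <> qs_g2 c r eps).
  { unfold qs_g1, qs_g2; intro h; nra. }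
  destruct (key c r eps g1 g2 p hr heps hc1 hc2) as [hn [[hd [k1 k2]] | [hd [k1 k2]]]];
  rewrite (mse_form _ _ _ _ hne (GC1 c dc)), (mse_form _ _ _ _ hn (hc1 c dc)) in m;
  unfold qs_g1, qs_g2 in m;
  pose proof (hc1 w hw) as ew; unfold expect in ew.
  - assert (hra : 0 < r * alpha eps) by nra.
    assert (u0 : 0 <= g1 - c - r * alpha eps) by lra.
    assert (v0 : 0 <= c - r * alpha eps - g2) by lra.
    assert (uv : 0 <= (g1 - c - r * alpha eps) * (c - r * alpha eps - g2)) by nra.
    assert (s : r * alpha eps * ((g1 - c - r * alpha eps) + (c - r * alpha eps - g2)) <= 0) by nra.
    assert (s' : (g1 - c - r * alpha eps) + (c - r * alpha eps - g2) <= 0) by nra.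
    assert (e1 : g1 = qs_g1 c r eps) by (unfold qs_g1; lra).
    assert (e2 : g2 = qs_g2 c r eps) by (unfold qs_g2; lra).
    assert (ep : p w = qs_p c r eps w).
    { unfold qs_p. rewrite e1, e2 in ew; unfold qs_g1, qs_g2 in ew.
      apply (Rmult_eq_reg_r (2 * r * alpha eps)); [| nra].
      field_simplify; [nra | nra]. }
    unfold law; rewrite e1, e2, ep; reflexivity.
  - assert (hra : 0 < r * alpha eps) by nra.
    assert (u0 : 0 <= g2 - c - r * alpha eps) by lra.
    assert (v0 : 0 <= c - r * alpha eps - g1) by lra.
    assert (uv : 0 <= (g2 - c - r * alpha eps) * (c - r * alpha eps - g1)) by nra.
    assert (s : r * alpha eps * ((g2 - c - r * alpha eps) + (c - r * alpha eps - g1)) <= 0) by nra.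
    assert (s' : (g2 - c - r * alpha eps) + (c - r * alpha eps - g1) <= 0) by nra.
    assert (e1 : g1 = qs_g2 c r eps) by (unfold qs_g2; lra).
    assert (e2 : g2 = qs_g1 c r eps) by (unfold qs_g1; lra).
    assert (ep : p w = 1 - qs_p c r eps w).
    { unfold qs_p. rewrite e1, e2 in ew; unfold qs_g1, qs_g2 in ew.
      apply (Rmult_eq_reg_r (2 * r * alpha eps)); [| nra].
      field_simplify; [nra | nra]. }
    unfold law; rewrite e1, e2, ep.
    destruct (Req_EM_T x (qs_g2 c r eps)); destruct (Req_EM_T x (qs_g1 c r eps));
      try (subst; congruence); lra.
Qed.
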